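(* Let $K, L, \Gamma, \Delta, P, \Lambda$ be positive integers with $\Gamma \le L$, $\Delta \le K$, $\Lambda \le P$, $\Delta \mid K$ and $\Lambda \mid P$. Let $\bar{\mathcal{F}} \in \mathbb{R}^{K \times P \times \cdots \times P}$ (with $L$ modes of size $P$ after the first) be any demand tensor, $\bar{\mathcal{F}}(k,\underline{\mathbf{p}}) = c_{k,\underline{\mathbf{p}}}$, whose entries vanish at every index $(k,\underline{\mathbf{p}})$ for which more than $\Gamma$ coordinates of $\underline{\mathbf{p}}=(p_1,\dots,p_L)\in[P]^L$ are active (differ from $1$). Then there exist an integer $$N \le \frac{K}{\Delta}\binom{L}{\Gamma}\min\big(\Delta,\Lambda^{\Gamma}\big)\Big(\frac{P}{\Lambda}\Big)^{\Gamma},$$ a decoding matrix $\mathbf{D}\in\mathbb{R}^{K\times N}$ and an encoding tensor $\bar{\mathcal{E}}\in\mathbb{R}^{N\times P\times\cdots\times P}$ such that $\bar{\mathcal{F}} = \bar{\mathcal{E}}\times_1 \mathbf{D}$ (lossless recovery of all $K$ demands) and, for every $n\in[N]$: (i) the column $\mathbf{D}(:,n)$ has at most $\Delta$ nonzero entries; (ii) there is a set $\mathcal{S}_n\subseteq[L]$ with $|\mathcal{S}_n|\le\Gamma$ such that $\bar{\mathcal{E}}(n,\underline{\mathbf{p}})\neq 0$ only if all coordinates $p_\ell$ with $\ell\notin\mathcal{S}_n$ are inactive (equal to $1$); (iii) for each $\ell\in\mathcal{S}_n$, writing $\mathcal{P}_n=\{\underline{\mathbf{p}}:\bar{\mathcal{E}}(n,\underline{\mathbf{p}})\neq0\}$,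 one has $\max_{\underline{\mathbf{p}}\in\mathcal{P}_n}p_\ell-\min_{\underline{\mathbf{p}}\in\mathcal{P}_n}p_\ell+1\le\Lambda$. Consequently the system rate $R=K/N$ is achievable.
   Context: Distributed computing setting: $K$ users, $N$ servers, $L$ real basis subfunctions with outputs $W_1,\dots,W_L$. User $k$ requests $F_k=\sum_{\underline{\mathbf{p}}\in[P]^L} c_{k,\underline{\mathbf{p}}}\prod_{\ell\in[L]}W_\ell^{p_\ell}$; the coefficients form the order-$(L+1)$ tensor $\bar{\mathcal{F}}$. Server $n$ computes the subfunctions in $\mathcal{S}_n$ and the monomials indexed by $\mathcal{P}_n$, transmits $z_n=\sum_{\underline{\mathbf{p}}\in\mathcal{P}_n}e_{n,\underline{\mathbf{p}}}\prod_\ell W_\ell^{p_\ell}$ (with $\bar{\mathcal{E}}(n,\underline{\mathbf{p}})=e_{n,\underline{\mathbf{p}}}$) to at most $\Delta$ users, and user $k$ forms $F'_k=\sum_n d_{k,n}z_n$ with $\mathbf{D}=(d_{k,n})$; error-free recovery for all demands is equivalent to $\bar{\mathcal{F}}=\bar{\mathcal{E}}\times_1\mathbf{D}$. Constraints: computation cost $\Gamma$ (number of subfunctions per server), communication cost $\Delta$ (users per server), multiplication cost $\Lambda$ (range of exponents of each computed subfunction per server). The mode-1 product $\bar{\mathcal{E}}\times_1\mathbf{D}$ is defined by unfolding $\bar{\mathcal{E}}$ along mode 1 into $\bar{\mathcal{E}}_{(1)}\in\mathbb{R}^{N\times P^L}$, computing $\mathbf{D}\bar{\mathcal{E}}_{(1)}$,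 and folding back to a $K\times P\times\cdots\times P$ tensor; equivalently $(\bar{\mathcal{E}}\times_1\mathbf{D})(k,\underline{\mathbf{p}})=\sum_n d_{k,n}\bar{\mathcal{E}}(n,\underline{\mathbf{p}})$. The system rate is $R=K/N$. *)

(* Defs.v *)
(* Exponent index p_l in [P] = {1..P} is encoded as i : 'I_P
   with value i = p_l - 1; "inactive" (p_l = 1) means val i = 0. *)
From HB Require Import structures.
From mathcomp Require Import all_boot all_order all_algebra.
From mathcomp Require Import reals.
Set Implicit Arguments. Unset Strict Implicit. Unset Printing Implicit Defensive.
Import Order.TTheory GRing.Theory Num.Theory.
Local Open Scope ring_scope.

Definition midx (L P : nat) := {ffun 'I_L -> 'I_P}.

Definition active (L P : nat) (p : midx L P) (l : 'I_L) : bool := (val (p l) != 0)%N.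

Definition num_active (L P : nat) (p : midx L P) : nat := #|[set l | active p l]|.

Definition mode1_prod (R : ringType) (K N L P : nat)
  (E : 'I_N -> midx L P -> R) (D : 'M[R]_(K, N)) : 'I_K -> midx L P -> R :=
  fun k p => \sum_(n < N) D k n * E n p.

(* Main.v *)
Require Import Defs.
From HB Require Import structures.
From mathcomp Require Import all_boot all_order all_algebra.
From mathcomp Require Import reals.
From mathcomp Require Import zify.
From Stdlib Require Import FunctionalExtensionality.
Set Implicit Arguments. Unset Strict Implicit. Unset Printing Implicit Defensive.
Import Order.TTheory GRing.Theory Num.Theory.
Local Open Scope ring_scope.

Lemma pad_set (T : finType) (n : nat) : forall (A : {set T}),
  (#|A| + n <= #|T|)%N -> exists B : {set T}, A \subset B /\ #|B| = (#|A| + n)%N.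
Proof.
elim: n => [|n IH] A hA.
  by exists A; rewrite addn0.
have : (0 < #|~: A|)%N by have := cardsC A; lia.
rewrite card_gt0 => /set0Pn [x]; rewrite in_setC => xA.
have cx : #|x |: A| = #|A|.+1 by rewrite cardsU1 xA.
have [B [sB cB]] : exists B : {set T}, x |: A \subset B /\ #|B| = (#|x |: A| + n)%N.
  by apply: IH; rewrite cx; lia.
exists B; split; last by rewrite cB cx; lia.
by apply: subset_trans sB; apply: subsetUr.
Qed.

Definition supp_in (L m : nat) (S : {set 'I_L}) (f : {ffun 'I_L -> 'I_m}) : bool :=
  [forall l, (l \notin S) ==> (val (f l) == 0%N)].

Definition cellset (L m G : nat) : {set {set 'I_L} * {ffun 'I_L -> 'I_m}} :=
  [set x : {set 'I_L} * {ffun 'I_L -> 'I_m} | (#|x.1| == G) && supp_in x.1 x.2].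

Lemma card_cellset (L m G : nat) : (0 < m)%N ->
  #|cellset L m G| = ('C(L, G) * m ^ G)%N.
Proof.
move=> hm; set y0 := Ordinal hm.
rewrite /cellset -sum1_card.
rewrite (eq_bigl (fun x : {set 'I_L} * {ffun 'I_L -> 'I_m} => (#|x.1| == G) && supp_in x.1 x.2)); last by move=> x; rewrite inE.
rewrite -(pair_big_dep (fun S : {set 'I_L} => #|S| == G) (fun S f => supp_in S f) (fun _ _ => 1%N)) /=.
rewrite (eq_bigr (fun _ => m ^ G)%N).
  by rewrite sum_nat_const -[X in 'C(X, _)]card_ord -card_draws; congr (_ * _)%N;
     apply: eq_card => S; rewrite inE.
move=> S /eqP cS; rewrite sum1_card -cS -[X in (X ^ _)%N]card_ord -(card_pffun_on y0 S predT).
apply: eq_card => f; rewrite inE /supp_in; apply/forallP/familyP => H l; have := H l;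
  case: (boolP (l \in S)) => lS //=.
all: try by move=> /eqP h; rewrite inE; apply/eqP/val_inj.
all: try by rewrite inE => /eqP ->.
Qed.

Definition good (R : ringType) (K L P Gamma Delta Lambda : nat)
  (d : 'I_K -> R) (e : midx L P -> R) : Prop :=
  (#|[set k | d k != 0%R]| <= Delta)%N /\
  exists S : {set 'I_L},
    (#|S| <= Gamma)%N /\
    (forall p, e p != 0 -> forall l, l \notin S -> ~~ active p l) /\
    (forall l, l \in S -> forall p q, e p != 0 -> e q != 0 ->
       (val (p l) + 1 <= val (q l) + Lambda)%N).

Lemma pack (R : ringType) (K L P Gamma Delta Lambda : nat) (T : finType) (A : {set T})
  (F : 'I_K -> midx L P -> R) (D : 'I_K -> T -> R) (E : T -> midx L P -> R) :
  (forall k p, F k p = \sum_(t in A) D k t * E t p) ->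
  (forall t, t \in A -> good Gamma Delta Lambda (fun k => D k t) (E t)) ->
  exists (D' : 'M[R]_(K, #|A|)) (E' : 'I_#|A| -> midx L P -> R),
    F = mode1_prod E' D' /\
    forall n : 'I_#|A|, good Gamma Delta Lambda (fun k => D' k n) (E' n).
Proof.
move=> hF hg.
exists (\matrix_(k, n) D k (enum_val n)), (fun n => E (enum_val n)); split.
  apply: functional_extensionality => k; apply: functional_extensionality => p; rewrite hF /mode1_prod big_enum_val.
  by apply: eq_bigr => n _; rewrite mxE.
move=> n; have [h1 h2] := hg _ (enum_valP n); split=> //.
by rewrite (eq_card (B := [set k | D k (enum_val n) != 0])) // => k; rewrite !inE mxE.
Qed.

Definition actset (L P : nat) (p : midx L P) : {set 'I_L} := [set l | active p l].

Definition Sp (L P G : nat) (p : midx L P) : {set 'I_L} :=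
  odflt set0 [pick S : {set 'I_L} | (#|S| == G) && (actset p \subset S)].

Lemma Sp_spec (L P G : nat) (p : midx L P) : (G <= L)%N -> (num_active p <= G)%N ->
  #|Sp G p| = G /\ actset p \subset Sp G p.
Proof.
move=> hGL hp; rewrite /Sp; case: pickP => [S /andP [/eqP -> h] //|].
have hpad : (#|actset p| + (G - #|actset p|) <= #|'I_L|)%N.
  by rewrite card_ord subnKC //; rewrite /num_active in hp.
have [B [sB cB]] := pad_set hpad.
move=> /(_ B); rewrite cB sB andbT.
by rewrite /num_active /actset in hp *; rewrite subnKC // eqxx.
Qed.

Lemma Sp_card (L P G : nat) (p : midx L P) : (G <= L)%N -> (num_active p <= G)%N ->
  #|Sp G p| = G.
Proof. by move=> h1 h2; case: (Sp_spec h1 h2). Qed.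

Lemma Sp_act (L P G : nat) (p : midx L P) l : (G <= L)%N -> (num_active p <= G)%N ->
  l \notin Sp G p -> val (p l) = 0%N.
Proof.
move=> h1 h2 hl; case: (Sp_spec h1 h2) => _ /subsetP /(_ l) H.
apply/eqP; apply: contraR hl => hne; apply: H; by rewrite inE /active.
Qed.

Lemma blP (P La : nat) (h1 : (0 < La)%N) (h2 : (La %| P)%N) (i : 'I_P) :
  (i %/ La < P %/ La)%N.
Proof. by rewrite ltn_divLR // divnK. Qed.

Definition bl (L P La : nat) (h1 : (0 < La)%N) (h2 : (La %| P)%N) (p : midx L P) :
  {ffun 'I_L -> 'I_(P %/ La)} := [ffun l => Ordinal (blP h1 h2 (p l))].

Lemma card_grp (K De : nat) (g : nat) : (0 < De)%N ->
  (#|[set k : 'I_K | (k %/ De)%N == g]| <= De)%N.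
Proof.
move=> hD.
have := @leq_card_in _ _ (fun k : 'I_K => Ordinal (ltn_pmod k hD)) [set k : 'I_K | (k %/ De)%N == g].
rewrite card_ord; apply=> x y; rewrite !inE => /eqP hx /eqP hy [] hxy.
by apply: val_inj; rewrite /= (divn_eq x De) (divn_eq y De) hx hy hxy.
Qed.

Lemma case1 (R : realType) (K L Gamma Delta P Lambda : nat)
  (hD : (0 < Delta)%N) (hLa : (0 < Lambda)%N) (hP : (0 < P)%N)
  (hGL : (Gamma <= L)%N) (hLaP : (Lambda <= P)%N) (hLadvd : (Lambda %| P)%N)
  (F : 'I_K -> midx L P -> R)
  (hF : forall k p, (Gamma < num_active p)%N -> F k p = 0) :
  exists (D : 'M[R]_(K, (K * ('C(L, Gamma) * (P %/ Lambda) ^ Gamma))%N))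
         (E : 'I_(K * ('C(L, Gamma) * (P %/ Lambda) ^ Gamma))%N -> midx L P -> R),
    F = mode1_prod E D /\
    forall n, good Gamma Delta Lambda (fun k => D k n) (E n).
Proof.
have hm : (0 < P %/ Lambda)%N by rewrite divn_gt0.
set A := setX [set: 'I_K] (cellset L (P %/ Lambda) Gamma).
have cA : #|A| = (K * ('C(L, Gamma) * (P %/ Lambda) ^ Gamma))%N.
  by rewrite cardsX cardsT card_ord card_cellset.
rewrite -cA.
pose cell (p : midx L P) := (Sp Gamma p, bl hLa hLadvd p).
have cell_in p : (num_active p <= Gamma)%N -> cell p \in cellset L (P %/ Lambda) Gamma.
  move=> hp; rewrite inE /= Sp_card // eqxx /=; apply/forallP => l; apply/implyP => hl.
  by rewrite /bl ffunE /= (Sp_act hGL hp hl) div0n.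
apply: (@pack R K L P Gamma Delta Lambda _ A F
   (fun k t => (nat_of_ord k == nat_of_ord t.1)%:R) (fun t p => F t.1 p * (cell p == t.2)%:R)).
- move=> k p; case: (boolP (cell p \in cellset L (P %/ Lambda) Gamma)) => hc.
    rewrite (bigD1 (k, cell p)) /=; last by rewrite in_setX inE hc.
    rewrite eqxx (eqxx (cell p)) /= mulr1 mul1r big1 ?addr0 // => [[k' c']] /andP [_ hne] /=.
    case: eqP => [/val_inj ekk|hk]; last by rewrite mul0r.
    case: eqP => [ec|]; last by rewrite !mulr0.
    by move: hne; rewrite ekk ec eqxx.
  have -> : F k p = 0.
    by apply: hF; rewrite ltnNge; apply: contra hc; apply: cell_in.
  rewrite big1 // => [[k' c']]; rewrite in_setX => /andP [_ hc'] /=.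
  have -> : (cell p == c') = false by apply: contraNF hc => /eqP ->.
  by rewrite !mulr0.
- move=> [k0 [S b]]; rewrite in_setX => /andP [_]; rewrite inE /= => /andP [/eqP cS hS].
  split.
    apply: leq_trans (_ : #|[set k0]| <= _)%N; last by rewrite cards1.
    by apply: subset_leq_card; apply/subsetP => k; rewrite !inE; case: (nat_of_ord k =P nat_of_ord k0) => [/val_inj ->|_]; rewrite ?eqxx // mulr0n eqxx.
  exists S; split; first by rewrite cS.
  have key p : F k0 p * (cell p == (S, b))%:R != 0 ->
      [/\ (num_active p <= Gamma)%N, Sp Gamma p = S & bl hLa hLadvd p = b].
    case: (boolP (num_active p <= Gamma)%N) => hp; last first.
      by rewrite hF ?mul0r ?eqxx // ltnNge.
    case: (cell p =P (S, b)) => [[<- <-]|_] //; by rewrite mulr0n mulr0 eqxx.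
  split.
    move=> p /key [hp hSp _] l hl; rewrite /active negbK.
    by apply/eqP; apply: (Sp_act hGL hp); rewrite hSp.
  move=> l _ p q /key [_ _ hbp] /key [_ _ hbq].
  have : val (bl hLa hLadvd p l) = val (bl hLa hLadvd q l) by rewrite hbp hbq.
  rewrite /bl !ffunE /= => e.
  have := divn_eq (p l) Lambda; have := divn_eq (q l) Lambda.
  have := ltn_pmod (p l) hLa; rewrite e; lia.
Qed.

Lemma case2 (R : realType) (K L Gamma Delta P Lambda : nat)
  (hD : (0 < Delta)%N) (hLa : (0 < Lambda)%N) (hP : (0 < P)%N)
  (hGL : (Gamma <= L)%N) (hDdvd : (Delta %| K)%N)
  (F : 'I_K -> midx L P -> R)
  (hF : forall k p, (Gamma < num_active p)%N -> F k p = 0) :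
  exists (D : 'M[R]_(K, (K %/ Delta * ('C(L, Gamma) * P ^ Gamma))%N))
         (E : 'I_(K %/ Delta * ('C(L, Gamma) * P ^ Gamma))%N -> midx L P -> R),
    F = mode1_prod E D /\
    forall n, good Gamma Delta Lambda (fun k => D k n) (E n).
Proof.
set A := setX [set: 'I_(K %/ Delta)] (cellset L P Gamma).
have cA : #|A| = (K %/ Delta * ('C(L, Gamma) * P ^ Gamma))%N.
  by rewrite cardsX cardsT card_ord card_cellset.
rewrite -cA.
pose cell (p : midx L P) : {set 'I_L} * {ffun 'I_L -> 'I_P} := (Sp Gamma p, p).
have cell_in p : (num_active p <= Gamma)%N -> cell p \in cellset L P Gamma.
  move=> hp; rewrite inE /= Sp_card // eqxx /=; apply/forallP => l; apply/implyP => hl.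
  by rewrite (Sp_act hGL hp hl).
apply: (@pack R K L P Gamma Delta Lambda _ A F
   (fun k t => ((k %/ Delta)%N == nat_of_ord t.1)%:R * F k t.2.2)
   (fun t p => (cell p == t.2)%:R)).
- move=> k p; case: (boolP (num_active p <= Gamma)%N) => hp.
    have hg : (k %/ Delta < K %/ Delta)%N by rewrite ltn_divLR // divnK.
    rewrite (bigD1 (Ordinal hg, cell p)) /=; last by rewrite in_setX inE cell_in.
    rewrite eqxx (eqxx (cell p)) /= mulr1 mul1r big1 ?addr0 // => [[g c']] /andP [_ hne] /=.
    case: eqP => [ekg|hk]; last by rewrite !mul0r.
    case: (cell p =P c') => [ec|_]; last by rewrite mulr0n !mulr0.
    have eg : g = Ordinal hg by apply: val_inj; rewrite /= ekg.
    by move: hne; rewrite eg ec eqxx.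
  have -> : F k p = 0 by apply: hF; rewrite ltnNge.
  rewrite big1 // => [[g c']] _ /=.
  case: (cell p =P c') => [<-|_]; last by rewrite mulr0n !mulr0.
  by rewrite hF ?mulr0 ?mul0r // ltnNge.
- move=> [g [S q]]; rewrite in_setX => /andP [_]; rewrite inE /= => /andP [/eqP cS hS].
  split.
    apply: leq_trans (card_grp K g hD).
    apply: subset_leq_card; apply/subsetP => k; rewrite !inE.
    by case: (_ %/ _ == _)%N; rewrite // mulr0n mul0r eqxx.
  exists S; split; first by rewrite cS.
  have key p : (cell p == (S, q))%:R != 0 :> R -> p = q.
    by case: (cell p =P (S, q)) => [[_ ->]|_] //; rewrite mulr0n eqxx.
  split.
    move=> p /key -> l hl; rewrite /active negbK.
    by move/forallP: hS => /(_ l) /implyP /(_ hl).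
  by move=> l _ p r /key -> /key ->; lia.
Qed.

Theorem theorem1 (R : realType) (K L Gamma Delta P Lambda : nat)
  (hK : (0 < K)%N) (hL : (0 < L)%N) (hG : (0 < Gamma)%N) (hD : (0 < Delta)%N)
  (hP : (0 < P)%N) (hLa : (0 < Lambda)%N)
  (hGL : (Gamma <= L)%N) (hDK : (Delta <= K)%N) (hLaP : (Lambda <= P)%N)
  (hDdvd : (Delta %| K)%N) (hLadvd : (Lambda %| P)%N)
  (F : 'I_K -> midx L P -> R)
  (hF : forall k p, (Gamma < num_active p)%N -> F k p = 0) :
  exists N : nat,
    (N <= (K %/ Delta) * 'C(L, Gamma) * minn Delta (Lambda ^ Gamma)
            * (P %/ Lambda) ^ Gamma)%N /\
    exists (D : 'M[R]_(K, N)) (E : 'I_N -> midx L P -> R),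
      F = mode1_prod E D /\
      forall n : 'I_N,
        (#|[set k | D k n != 0%R]| <= Delta)%N /\
        exists S : {set 'I_L},
          (#|S| <= Gamma)%N /\
          (forall p, E n p != 0 -> forall l, l \notin S -> ~~ active p l) /\
          (forall l, l \in S -> forall p q, E n p != 0 -> E n q != 0 ->
             (val (p l) + 1 <= val (q l) + Lambda)%N).
Proof.
case: (leqP Delta (Lambda ^ Gamma)%N) => h.
  have [D [E [eF hg]]] := case1 hD hLa hP hGL hLaP hLadvd hF.
  exists (K * ('C(L, Gamma) * (P %/ Lambda) ^ Gamma))%N; split.
    rewrite -{1}(divnK hDdvd); lia.
  by exists D, E; split=> // n; exact: hg n.
have [D [E [eF hg]]] := case2 (Lambda := Lambda) hD hLa hP hGL hDdvd hF.
exists (K %/ Delta * ('C(L, Gamma) * P ^ Gamma))%N; split.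
  rewrite -{1}(divnK hLadvd) expnMn; lia.
by exists D, E; split=> // n; exact: hg n.
Qed.
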